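(* Let $G$ be a finite graph, and let $L$ be an induced subgraph of $G$. Let $\mathcal{F}$ be a set of connected subgraphs of $L$. Let $k,\theta\in\mathbb{N}$ and $r,r',\xi,\eta\in\mathbb{R}_{\ge0}$ with $r'\ge r/2$. Let $Z$ be a subset of $V(G)$ with $N_G(V(L))\subseteq Z$ such that $Z$ is $(\xi,\eta)$-centered in $G$. If $L$ does not contain $k$ members of $\mathcal{F}$ pairwise at distance in $G$ at least $r$, then either 1. there exists $Z^*\subseteq V(G)$ with $N_G^{\le r'}[Z]\subseteq Z^*\subseteq V(L)\cup N_G^{\le r'}[Z]$ such that $Z^*$ is $(\xi+3\theta-3,\eta+r')$-centered in $G$ and intersects all members of $\mathcal{F}$, and $Z^*\setminus N_G^{\le r'}[Z]$ is $(3\theta-3,r')$-centered in $G$, or 2. there exists a separation $(A^*,B^* )$ of $L$ of order less than $\theta$ such that each of $A^*-N_G^{\le r'}[V(A^*\cap B^* )]$ and $B^*-N_G^{\le r'}[V(A^*\cap B^* )]$ does not contain $k-1$ members of $\mathcal{F}-N_G^{\le r'}[Z]$ pairwise at distance in $G$ at least $r$, or 3. the set $\mathcal{T}$ consisting of all separations $(A,B)$ of $L$ of order less than $\theta$ such that $A-N_G^{\le r'}[V(A\cap B)]$ does not contain a member of $\mathcal{F}-N_G^{\le r'}[Z]$ but $B-N_G^{\le r'}[V(A\cap B)]$ contains a member of $\mathcal{F}-N_G^{\le r'}[Z]$ is a tangle in $L$ of order $\theta$.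
   Context: $\operatorname{dist}_G$ is graph distance in $G$, extended to sets and subgraphs by minima. $N_G^{\le r}[S]=\{v\in V(G):\operatorname{dist}_G(v,S)\le r\}$, $N_G(S)=N_G^{\le1}[S]\setminus S$. A set $Z$ is $(k,r)$-centered in $G$ if $Z\subseteq N_G^{\le r}[W]$ for some $W$ with $|W|\le k$. For a subgraph $A$ and vertex set $S$, $A-S$ is the subgraph obtained by deleting the vertices of $S\cap V(A)$. For a set $\mathcal{F}$ of subgraphs and $S\subseteq V(G)$, $\mathcal{F}-S$ is the set of members of $\mathcal{F}$ disjoint from $S$; ''a subgraph contains a member of $\mathcal{F}$'' means some member of $\mathcal{F}$ is a subgraph of it. A separation of a graph $L$ is a pair $(A,B)$ of edge-disjoint subgraphs with $A\cup B=L$; its order is $|V(A)\cap V(B)|$. A tangle in $L$ of order $\theta$ is a set $\mathcal{T}$ of separations of $L$ of order less than $\theta$ such that (T1) for every separation $(A,B)$ of $L$ of order less than $\theta$, $(A,B)\in\mathcal{T}$ or $(B,A)\in\mathcal{T}$; (T2) if $(A_i,B_i)\in\mathcal{T}$ for $i=1,2,3$ then $A_1\cup A_2\cup A_3\ne L$; (T3) if $(A,B)\in\mathcal{T}$ then $V(A)\ne V(L)$. *)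

(* Defs.v *)
From HB Require Import structures.
From mathcomp Require Import all_boot all_order all_algebra.
From mathcomp Require Import boolp reals.
Set Implicit Arguments. Unset Strict Implicit. Unset Printing Implicit Defensive.
Import Order.TTheory GRing.Theory Num.Theory.
Local Open Scope ring_scope.

(* The graph G: vertex type T (finite), adjacency e (assumed symmetric and
   irreflexive in the theorem).  A subgraph is a pair (vertex set, edge set),
   an edge being the 2-element set [set u; v]. *)
Definition sg (T : finType) := ({set T} * {set {set T}})%type.
Definition sgV (T : finType) (H : sg T) : {set T} := H.1.
Definition sgE (T : finType) (H : sg T) : {set {set T}} := H.2.

Section Graphs.
Variables (T : finType) (e : rel T) (R : realType).

Definition wf_sg (H : sg T) : Prop :=
  forall f, f \in sgE H -> exists u v,
    [/\ u \in sgV H, v \in sgV H, e u v & f = [set u; v]].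

Definition subgraph (H K : sg T) : Prop :=
  [/\ wf_sg H, sgV H \subset sgV K & sgE H \subset sgE K].

Definition induced (S : {set T}) : sg T :=
  (S, [set [set x.1; x.2] | x in setX S S & e x.1 x.2]).

Definition connected_sg (H : sg T) : Prop :=
  sgV H != set0 /\
  forall u v, u \in sgV H -> v \in sgV H ->
    exists p : seq T, path (fun a b => [set a; b] \in sgE H) u p /\ last u p = v.

Definition walk (u v : T) (p : seq T) : Prop := path e u p /\ last u p = v.

Definition dist_le (u v : T) (r : R) : Prop :=
  exists p, walk u v p /\ (size p)%:R <= r.

Definition ball (S : {set T}) (r : R) : {set T} :=
  [set v | `[< exists s, s \in S /\ dist_le v s r >]].

Definition nbh (S : {set T}) : {set T} := ball S 1 :\: S.

Definition centered (Z : {set T}) (k r : R) : Prop :=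
  exists W : {set T}, #|W|%:R <= k /\ Z \subset ball W r.

(* dist_G(H1, H2) >= r (distance between vertex sets, min over pairs;
   infinite if no walk) *)
Definition dist_ge (H1 H2 : sg T) (r : R) : Prop :=
  forall u v p, u \in sgV H1 -> v \in sgV H2 -> walk u v p -> r <= (size p)%:R.

Definition sg_del (H : sg T) (S : {set T}) : sg T :=
  (sgV H :\: S, [set f in sgE H | [disjoint f & S]]).

Definition fam_del (F : {set sg T}) (S : {set T}) : {set sg T} :=
  [set H in F | [disjoint sgV H & S]].

Definition contains_far (K : sg T) (F : {set sg T}) (k : nat) (r : R) : Prop :=
  exists Fs : {set sg T},
    [/\ Fs \subset F, #|Fs| = k,
        (forall H, H \in Fs -> subgraph H K) &
        (forall H1 H2, H1 \in Fs -> H2 \in Fs -> H1 != H2 -> dist_ge H1 H2 r)].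

Definition contains_mem (K : sg T) (F : {set sg T}) : Prop :=
  exists2 H, H \in F & subgraph H K.

Definition sg_union (A B : sg T) : sg T := (sgV A :|: sgV B, sgE A :|: sgE B).

Definition separation (L A B : sg T) : Prop :=
  [/\ wf_sg A, wf_sg B, [disjoint sgE A & sgE B] & sg_union A B = L].

Definition sep_order (A B : sg T) : nat := #|sgV A :&: sgV B|.

Definition tangle (L : sg T) (Tg : sg T -> sg T -> Prop) (theta : nat) : Prop :=
  [/\ (forall A B, Tg A B -> separation L A B /\ (sep_order A B < theta)%N),
      (forall A B, separation L A B -> (sep_order A B < theta)%N ->
                   Tg A B \/ Tg B A),
      (forall A1 B1 A2 B2 A3 B3, Tg A1 B1 -> Tg A2 B2 -> Tg A3 B3 ->
                   sg_union (sg_union A1 A2) A3 <> L) &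
      (forall A B, Tg A B -> sgV A <> sgV L)].

End Graphs.

(* Main.v *)
Require Import Defs.
From HB Require Import structures.
From mathcomp Require Import all_boot all_order all_algebra.
From mathcomp Require Import boolp reals.
From mathcomp Require Import lra zify.
Import Order.TTheory GRing.Theory Num.Theory.
Local Open Scope ring_scope.
Set Implicit Arguments. Unset Strict Implicit.

Lemma inballP (R : realType) (T : finType) (e : rel T) (S : {set T}) (a : R) v :
  reflect (exists s, s \in S /\ dist_le e v s a) (v \in ball e S a).
Proof. rewrite /ball inE; exact: asboolP. Qed.

Lemma ball_self (R : realType) (T : finType) (e : rel T) (S : {set T}) (a : R) v :
  0 <= a -> v \in S -> v \in ball e S a.
Proof.
move=> a0 vS; apply/inballP; exists v; split=> //; exists [::]; split => //.

Qed.

Lemma walk_rev (T : finType) (e : rel T) (esym : symmetric e) u v p :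
  walk e u v p -> exists q, walk e v u q /\ size q = size p.
Proof.
elim: p u => [|y p IH] u [] /=.
  by move=> _ <-; exists [::].
move=> /andP[h1 h2] hl; have [q [[hq1 hq2] hs]] := IH y (conj h2 hl).
exists (rcons q u); split; last by rewrite size_rcons hs.
split; last by rewrite last_rcons.
by rewrite rcons_path hq1 hq2 esym.
Qed.

Lemma notin_ball (R : realType) (T : finType) (e : rel T) (X : {set T}) (a : R) u x q :
  u \notin ball e X a -> x \in X -> walk e u x q -> a < (size q)%:R.
Proof.
move=> hu hx hw; rewrite ltNge; apply/negP => hle.
by move/negP: hu; apply; apply/inballP; exists x; split => //; exists q.
Qed.

Lemma path_inv (T : Type) (rel0 : rel T) (P : T -> Prop) u p :
  path rel0 u p -> P u -> (forall x y, P x -> rel0 x y -> P y) -> P (last u p).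
Proof.
elim: p u => [|y p IH] u /=; first by [].
move=> /andP[h1 h2] Pu st.
by apply: (IH _ h2 _ st); exact: st Pu h1.
Qed.

Lemma path_split (T : Type) (e : rel T) (P X : pred T) u p :
  path e u p -> P u -> ~~ P (last u p) ->
  (forall a b, P a -> e a b -> P b \/ X b) ->
  exists p1 p2, p = p1 ++ p2 /\ X (last u p1).
Proof.
elim: p u => [|y p IH] u /=; first by move=> _ ->.
move=> /andP[h1 h2] Pu nP cl.
case: (cl _ _ Pu h1) => [Py|Xy].
- by have [p1 [p2 [-> H]]] := IH y h2 Py nP cl; exists (y :: p1), p2.
- by exists [:: y], p.
Qed.

Lemma edge_ends (T : finType) (e : rel T) (A : sg T) a b :
  wf_sg e A -> [set a; b] \in sgE A -> a \in sgV A /\ b \in sgV A.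
Proof.
move=> wf /wf [u [v [hu hv _ heq]]].
have ha : a \in [set u; v] by rewrite -heq !inE eqxx.
have hb : b \in [set u; v] by rewrite -heq !inE eqxx orbT.
by move: ha hb; rewrite !inE => /orP[]/eqP-> /orP[]/eqP->.
Qed.

Lemma induced_edge (T : finType) (e : rel T) (VL : {set T}) a b :
  a \in VL -> b \in VL -> e a b -> [set a; b] \in sgE (induced e VL).
Proof.
move=> ha hb hab; apply/imsetP; exists (a, b) => //.
by rewrite !inE /= ha hb hab.
Qed.

Lemma sep_parts (T : finType) (e : rel T) (VL : {set T}) (A B : sg T) :
  separation e (induced e VL) A B ->
  [/\ wf_sg e A, wf_sg e B, sgV A :|: sgV B = VL &
      sgE A :|: sgE B = sgE (induced e VL)].
Proof.
by case=> wA wB _ hU; split => //; [exact: (congr1 fst hU) | exact: (congr1 snd hU)].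
Qed.

Lemma sep_sym (T : finType) (e : rel T) L (A B : sg T) :
  separation e L A B -> separation e L B A.
Proof.
case=> wA wB d hU; split => //; first by rewrite disjoint_sym.
by rewrite -hU /sg_union setUC [sgE B :|: _]setUC.
Qed.

Lemma sgdelV (T : finType) (e : rel T) (H A : sg T) (X : {set T}) x :
  subgraph e H (sg_del A X) -> x \in sgV H -> x \in sgV A /\ x \notin X.
Proof.
case=> _ sV _ hx; have := subsetP sV x hx.
by rewrite /sg_del /sgV /= inE => /andP[].
Qed.

Lemma ball_mono (R : realType) (T : finType) (e : rel T) (X Y : {set T}) (a b : R) :
  X \subset Y -> a <= b -> ball e X a \subset ball e Y b.
Proof.
move=> sXY hab; apply/subsetP => x /inballP [s [hs [p [hw hp]]]].
apply/inballP; exists s; split; first exact: (subsetP sXY).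
by exists p; split => //; apply: le_trans hab.
Qed.

Lemma ball_trans (R : realType) (T : finType) (e : rel T) (X Y : {set T}) (a b : R) x :
  x \in ball e X a -> X \subset ball e Y b -> x \in ball e Y (a + b).
Proof.
move=> /inballP [s [hs [p [[hp hl] hsz]]]] sXY.
have /inballP [y [hy [q [[hq hql] hqs]]]] := subsetP sXY s hs.
apply/inballP; exists y; split => //; exists (p ++ q); split.
  by split; rewrite ?cat_path ?last_cat hl ?hp ?hq ?hql.
by rewrite size_cat natrD lerD.
Qed.

Lemma side_lemma (R : realType) (T : finType) (e : rel T) (VL S : {set T}) (A B H : sg T) (r' : R) :
  separation e (induced e VL) A B -> S = sgV A :&: sgV B -> 0 <= r' ->
  subgraph e H (induced e VL) -> connected_sg H ->
  [disjoint sgV H & ball e S r'] ->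
  forall v, v \in sgV H -> v \in sgV A ->
  subgraph e H (sg_del A (ball e S r')).
Proof.
move=> hsep hS r0 [wH _ sE] [_ hconn] dH v vH vA.
have [wA wB hV hE] := sep_parts hsep.
have nb : forall x, x \in sgV H -> x \in ball e S r' = false.
  by move=> x hx; apply: disjointFr dH hx.
have inS : forall x, x \in sgV A -> x \in sgV B -> x \in ball e S r'.
  by move=> x xa xb; apply: ball_self => //; rewrite hS inE xa xb.
have EH : forall f, f \in sgE H -> f \in sgE A \/ f \in sgE B.
  by move=> f /(subsetP sE); rewrite -hE inE => /orP[]; [left|right].
have allA : forall w, w \in sgV H -> w \in sgV A.
  move=> w hw; have [p [hp hl]] := hconn v w vH hw.
  rewrite -hl; apply: (path_inv (P := fun x => x \in sgV A)) hp vA _.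
  move=> x y xA hxy; have [xH _] := edge_ends wH hxy.
  case: (EH _ hxy) => h.
    by have [] := edge_ends wA h.
  have [xB _] := edge_ends wB h.
  by have := inS x xA xB; rewrite nb.
split => //.
  by apply/subsetP => x hx; rewrite /sg_del /sgV /= inE nb // allA.
apply/subsetP => f hf; rewrite /sg_del /sgE /= inE.
have [a [b [ha hb _ hfe]]] := wH f hf.
apply/andP; split.
  case: (EH _ hf) => // h; rewrite hfe in h.
  have [aB _] := edge_ends wB h.
  by have := inS a (allA a ha) aB; rewrite nb.
rewrite -setI_eq0; apply/eqP/setP => x; rewrite hfe in_setI in_set0 in_set2.
by apply/negbTE/negP => /andP[/orP[]/eqP-> ]; rewrite nb.
Qed.

Lemma cross (R : realType) (T : finType) (e : rel T) (esym : symmetric e)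
  (VL Z S : {set T}) (A B : sg T) (r r' : R) u v p :
  separation e (induced e VL) A B -> S = sgV A :&: sgV B ->
  nbh e R VL \subset Z -> 0 <= r' -> r / 2 <= r' ->
  u \in sgV A -> u \notin ball e S r' -> u \notin ball e Z r' ->
  v \in sgV B -> v \notin ball e S r' -> v \notin ball e Z r' ->
  walk e u v p -> r <= (size p)%:R.
Proof.
move=> hsep hS hNZ r0 hr uA uS uZ vB vS vZ [hp hl].
have [wA wB hV hE] := sep_parts hsep.
have uB : u \notin sgV B.
  by apply/negP => uB; move/negP: uS; apply; apply: ball_self => //; rewrite hS inE uA uB.
have Pu : [pred x | (x \in sgV A) && (x \notin sgV B)] u by rewrite /= uA uB.
have Pv : ~~ [pred x | (x \in sgV A) && (x \notin sgV B)] (last u p).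
  by rewrite hl /= vB andbF.
have cl : forall a b, [pred x | (x \in sgV A) && (x \notin sgV B)] a -> e a b ->
   [pred x | (x \in sgV A) && (x \notin sgV B)] b \/ [pred x | (x \in Z) || (x \in S)] b.
  move=> a b /andP[aA aB] hab; case: (boolP (b \in VL)) => bL.
  + have aL : a \in VL by rewrite -hV inE aA.
    have := induced_edge aL bL hab; rewrite -hE. rewrite in_setU => /orP[hEA|hEB].
    * have [_ bA] := edge_ends wA hEA.
      case: (boolP (b \in sgV B)) => bB; [right | left].
        by rewrite /= hS inE bA bB orbT.
      by rewrite /= bA bB.
    * by have [aB' _] := edge_ends wB hEB; rewrite aB' in aB.
  + right => /=; apply/orP; left; apply: (subsetP hNZ).
    rewrite /nbh in_setD bL /=; apply/inballP; exists a; split.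
      by rewrite -hV inE aA.
    by exists [:: a]; split => //; split => //=; rewrite esym hab.
have [p1 [p2 [hpe hX]]] := path_split hp Pu Pv cl.
subst p.
move: hp hl; rewrite cat_path last_cat => /andP[hp1 hp2] hl.
have hw1 : walk e u (last u p1) p1 by [].
have hw2 : walk e (last u p1) v p2 by [].
have [q [hq hqs]] := walk_rev esym hw2.
rewrite size_cat natrD -hqs.
move: hX => /orP[] hx.
  have h1 := notin_ball uZ hx hw1; have h2 := notin_ball vZ hx hq; lra.
have h1 := notin_ball uS hx hw1; have h2 := notin_ball vS hx hq; lra.
Qed.

Lemma far_side (R : realType) (T : finType) (e : rel T) (esym : symmetric e)
  (VL Z S : {set T}) (F : {set sg T}) (A B H2 : sg T) (r r' : R) (k : nat) :
  (forall H, H \in F -> connected_sg H /\ subgraph e H (induced e VL)) ->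
  separation e (induced e VL) A B -> S = sgV A :&: sgV B ->
  nbh e R VL \subset Z -> 0 <= r' -> r / 2 <= r' -> (0 < k)%N ->
  ~ contains_far e (induced e VL) F k r ->
  H2 \in fam_del F (ball e Z r') -> subgraph e H2 (sg_del B (ball e S r')) ->
  ~ contains_far e (sg_del A (ball e S r')) (fam_del F (ball e Z r')) k.-1 r.
Proof.
move=> Fc hsep hS hNZ r0 hr k0 hnot hH2 sH2 [Fs [sFs cFs subFs farFs]].
have [H2F dH2] : H2 \in F /\ [disjoint sgV H2 & ball e Z r'].
  by move: hH2; rewrite inE => /andP[].
have inS : forall x, x \in sgV A -> x \in sgV B -> x \in ball e S r'.
  by move=> x xa xb; apply: ball_self => //; rewrite hS inE xa xb.
have FsF : forall H, H \in Fs -> H \in F /\ [disjoint sgV H & ball e Z r'].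
  by move=> H /(subsetP sFs); rewrite inE => /andP[].
have vFs : forall H x, H \in Fs -> x \in sgV H ->
   [/\ x \in sgV A, x \notin ball e S r' & x \notin ball e Z r'].
  move=> H x hH hx; have [xA xS] := sgdelV (subFs H hH) hx.
  by split => //; apply/negbT; apply: disjointFr (FsF H hH).2 hx.
have vH2 : forall x, x \in sgV H2 ->
   [/\ x \in sgV B, x \notin ball e S r' & x \notin ball e Z r'].
  move=> x hx; have [xB xS] := sgdelV sH2 hx.
  by split => //; apply/negbT; apply: disjointFr dH2 hx.
have H2n : H2 \notin Fs.
  apply/negP => hin; have [/set0Pn [v hv] _] := (Fc H2 H2F).1.
  have [vA vS _] := vFs H2 v hin hv; have [vB _ _] := vH2 v hv.
  by move/negP: vS; apply; apply: inS.
apply: hnot; exists (H2 |: Fs); split.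
- apply/subsetP => H; rewrite in_setU1 => /orP[/eqP->|hH] //.
  exact: (FsF H hH).1.
- by rewrite cardsU1 H2n cFs add1n prednK.
- move=> H; rewrite in_setU1 => /orP[/eqP->|hH]; first exact: (Fc H2 H2F).2.
  exact: (Fc H (FsF H hH).1).2.
- have hS' : S = sgV B :&: sgV A by rewrite setIC.
  move=> H1 H1' ; rewrite !in_setU1 => /orP[/eqP->|h1] /orP[/eqP->|h1'] hne.
  + by rewrite eqxx in hne.
  + move=> u v p hu hv hw; have [uB uS uZ] := vH2 u hu; have [vA vS vZ] := vFs _ v h1' hv.
    exact: (cross esym (sep_sym hsep) hS' hNZ r0 hr uB uS uZ vA vS vZ hw).
  + move=> u v p hu hv hw; have [uA uS uZ] := vFs _ u h1 hu; have [vB vS vZ] := vH2 v hv.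
    exact: (cross esym hsep hS hNZ r0 hr uA uS uZ vB vS vZ hw).
  + exact: farFs.
Qed.

Lemma O1_lemma (R : realType) (T : finType) (e : rel T) (VL Z S3 : {set T})
  (F : {set sg T}) (r' xi eta : R) (theta : nat) :
  (forall H, H \in F -> connected_sg H /\ subgraph e H (induced e VL)) ->
  0 <= r' -> 0 <= eta -> centered e Z xi eta -> (0 < theta)%N ->
  (#|S3| <= 3 * theta - 3)%N ->
  (forall H, H \in F -> [disjoint sgV H & ball e Z r'] ->
      [disjoint sgV H & ball e S3 r'] -> False) ->
  exists Zs : {set T},
      [/\ ball e Z r' \subset Zs, Zs \subset VL :|: ball e Z r',
          centered e Zs (xi + 3 * theta%:R - 3) (eta + r'),
          (forall H, H \in F -> Zs :&: sgV H != set0) &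
          centered e (Zs :\: ball e Z r') (3 * theta%:R - 3) r'].
Proof.
move=> Fc r0 eta0 [W0 [hW0 sW0]] th0 hS3 hyp.
have c3 : (#|S3|%:R : R) <= 3 * theta%:R - 3.
  have -> : (3 * theta%:R - 3 : R) = (3 * theta - 3)%N%:R.
    by rewrite natrB ?natrM //; lia.
  by rewrite ler_nat.
exists (ball e Z r' :|: (VL :&: ball e S3 r')); split.
- exact: subsetUl.
- apply/subsetP => x; rewrite !in_setU in_setI => /orP[->|/andP[-> _]] //.
  by rewrite orbT.
- exists (W0 :|: S3); split.
    have h1 : (#|W0 :|: S3| <= #|W0| + #|S3|)%N by apply: leq_card_setU.
    have h2 : (#|W0 :|: S3|%:R : R) <= #|W0|%:R + #|S3|%:R.
      by rewrite -natrD ler_nat.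
    lra.
  apply/subsetP => x; rewrite in_setU in_setI => /orP[hx|/andP[_ hx]].
    have := ball_trans hx (subset_trans sW0 (ball_mono e (subsetUl W0 S3) (lexx eta))).
    by rewrite addrC.
  apply: (subsetP (ball_mono e (subsetUr W0 S3) _)) hx; lra.
- move=> H hH; apply/negP => /eqP h0; apply: (hyp H hH).
    rewrite -setI_eq0; apply/eqP/setP => x; rewrite in_setI in_set0.
    apply/negbTE/negP => /andP[hx hb].
    have : x \in (ball e Z r' :|: (VL :&: ball e S3 r')) :&: sgV H.
      by rewrite in_setI in_setU hb hx.
    by rewrite h0 in_set0.
  rewrite -setI_eq0; apply/eqP/setP => x; rewrite in_setI in_set0.
  apply/negbTE/negP => /andP[hx hb].
  have xL : x \in VL by have [_ sV _] := (Fc H hH).2; apply: (subsetP sV).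
  have : x \in (ball e Z r' :|: (VL :&: ball e S3 r')) :&: sgV H.
    by rewrite in_setI in_setU in_setI hb hx xL orbT.
  by rewrite h0 in_set0.
- exists S3; split => //.
  by apply/subsetP => x; rewrite in_setD in_setU in_setI => /andP[/negbTE -> /andP[]].
Qed.

Unset Implicit Arguments.
Set Strict Implicit.

Theorem lemma3p1 (R : realType) (T : finType) (e : rel T)
    (e_sym : symmetric e) (e_irr : irreflexive e)
    (VL : {set T}) (F : {set sg T})
    (F_conn : forall H, H \in F -> connected_sg H /\ subgraph e H (induced e VL))
    (k theta : nat) (r r' xi eta : R)
    (r_ge0 : 0 <= r) (r'_ge0 : 0 <= r') (xi_ge0 : 0 <= xi) (eta_ge0 : 0 <= eta)
    (hr' : r / 2 <= r')
    (Z : {set T}) (hNZ : nbh e R VL \subset Z) (hZc : centered e Z xi eta)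
    (hnot : ~ contains_far e (induced e VL) F k r) :
  let L := induced e VL in
  let NZ := ball e Z r' in
  (exists Zs : {set T},
      [/\ NZ \subset Zs, Zs \subset VL :|: NZ,
          centered e Zs (xi + 3 * theta%:R - 3) (eta + r'),
          (forall H, H \in F -> Zs :&: sgV H != set0) &
          centered e (Zs :\: NZ) (3 * theta%:R - 3) r'])
  \/
  (exists A B : sg T,
      [/\ separation e L A B, (sep_order A B < theta)%N,
          ~ contains_far e (sg_del A (ball e (sgV A :&: sgV B) r'))
                           (fam_del F NZ) k.-1 r &
          ~ contains_far e (sg_del B (ball e (sgV A :&: sgV B) r'))
                           (fam_del F NZ) k.-1 r])
  \/
  tangle e L (fun A B =>
      [/\ separation e L A B, (sep_order A B < theta)%N,
          ~ contains_mem e (sg_del A (ball e (sgV A :&: sgV B) r')) (fam_del F NZ) &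
          contains_mem e (sg_del B (ball e (sgV A :&: sgV B) r')) (fam_del F NZ)])
    theta.
Proof.
move=> L NZ.
have k0 : (0 < k)%N.
  case: k hnot => // hn; exfalso; apply: hn; exists set0; split.
  - exact: sub0set.
  - by rewrite cards0.
  - by move=> H; rewrite in_set0.
  - by move=> H; rewrite in_set0.
match goal with |- ?P1 \/ ?P2 \/ ?P3 =>
  case: (EM P1) => [?|n1]; [by left|];
  case: (EM P2) => [?|n2]; [by right; left|]; right; right end.
have FH : forall H, H \in fam_del F NZ -> H \in F /\ [disjoint sgV H & NZ].
  by move=> H; rewrite inE => /andP[].
split.
- by move=> A B [].
- move=> A B hs ho.
  have th0 : (0 < theta)%N by apply: leq_ltn_trans ho.
  have hS : sgV A :&: sgV B = sgV A :&: sgV B by [].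
  have hS' : sgV A :&: sgV B = sgV B :&: sgV A by rewrite setIC.
  have [wA wB hV hE] := sep_parts hs.
  case: (EM (contains_mem e (sg_del A (ball e (sgV A :&: sgV B) r')) (fam_del F NZ)))
    => cA; case: (EM (contains_mem e (sg_del B (ball e (sgV A :&: sgV B) r')) (fam_del F NZ)))
    => cB.
  + exfalso; apply: n2; exists A, B; split => //.
      case: cB => H2 hH2 sH2.
      exact: (far_side e_sym F_conn hs hS hNZ r'_ge0 hr' k0 hnot hH2 sH2).
    case: cA => H2 hH2 sH2.
    exact: (far_side e_sym F_conn (sep_sym hs) hS' hNZ r'_ge0 hr' k0 hnot hH2 sH2).
  + right; split.
    * exact: sep_sym.
    * by rewrite /sep_order setIC.
    * by rewrite setIC.
    * by rewrite setIC.
  + by left; split.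
  + exfalso; apply: n1.
    apply: (O1_lemma (S3 := sgV A :&: sgV B) F_conn r'_ge0 eta_ge0 hZc th0).
      rewrite /sep_order in ho; lia.
    move=> H hH dZ dS.
    have [[/set0Pn [v hv] _] [_ sV _]] := F_conn H hH.
    have HF' : H \in fam_del F NZ by rewrite inE hH dZ.
    have := subsetP sV v hv; rewrite /= -hV in_setU => /orP[vA|vB].
      by apply: cA; exists H => //; apply: (side_lemma hs hS r'_ge0 (F_conn H hH).2 (F_conn H hH).1 dS hv vA).
    apply: cB; exists H => //.
    rewrite hS'; rewrite hS' in dS.
    exact: (side_lemma (sep_sym hs) (erefl _) r'_ge0 (F_conn H hH).2 (F_conn H hH).1 dS hv vB).
- move=> A1 B1 A2 B2 A3 B3 [s1 o1 c1 _] [s2 o2 c2 _] [s3 o3 c3 _] hU.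
  have th0 : (0 < theta)%N by apply: leq_ltn_trans o1.
  set S1 := sgV A1 :&: sgV B1. set S2 := sgV A2 :&: sgV B2. set S3 := sgV A3 :&: sgV B3.
  apply: n1.
  apply: (O1_lemma (S3 := S1 :|: S2 :|: S3) F_conn r'_ge0 eta_ge0 hZc th0).
    have h1 := (leq_card_setU (S1 :|: S2) S3).1; have h2 := (leq_card_setU S1 S2).1.
    move: h1 h2 o1 o2 o3; rewrite /sep_order -/S1 -/S2 -/S3 => h1 h2 o1 o2 o3.
    lia.
  move=> H hH dZ dS.
  have [[/set0Pn [v hv] _] [_ sV _]] := F_conn H hH.
  have HF' : H \in fam_del F NZ by rewrite inE hH dZ.
  have hV : sgV A1 :|: sgV A2 :|: sgV A3 = VL by exact: (congr1 fst hU).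
  have dsub : forall X : {set T}, X \subset S1 :|: S2 :|: S3 -> [disjoint sgV H & ball e X r'].
    move=> X sX; rewrite -setI_eq0; apply/eqP/setP => x; rewrite in_setI in_set0.
    apply/negbTE/negP => /andP[hx hb].
    have hb' := subsetP (ball_mono e sX (lexx r')) x hb.
    by move: (disjointFr dS hx); rewrite hb'.
  have := subsetP sV v hv; rewrite /= -hV !in_setU => /orP[/orP[vA|vA]|vA].
  + apply: c1; exists H => //.
    apply: (side_lemma s1 (erefl _) r'_ge0 (F_conn H hH).2 (F_conn H hH).1 _ hv vA).
    by apply: dsub; rewrite -setUA subsetUl.
  + apply: c2; exists H => //.
    apply: (side_lemma s2 (erefl _) r'_ge0 (F_conn H hH).2 (F_conn H hH).1 _ hv vA).
    by apply: dsub; rewrite -setUA setUA [S1 :|: S2]setUC -setUA subsetUl.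
  + apply: c3; exists H => //.
    apply: (side_lemma s3 (erefl _) r'_ge0 (F_conn H hH).2 (F_conn H hH).1 _ hv vA).
    by apply: dsub; rewrite subsetUr.
- move=> A B [s _ _ [H hH sH]] hVA.
  have [/set0Pn [v hv] _] := (F_conn H (FH H hH).1).1.
  have [vB vS] := sgdelV sH hv.
  have [_ _ hV _] := sep_parts s.
  have vA : v \in sgV A by rewrite hVA /= -hV in_setU vB orbT.
  by move/negP: vS; apply; apply: ball_self => //; rewrite in_setI vA vB.
Qed.
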